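(* Fix $x\in\mathbf{X}$. (i) Suppose $H_{TP}(x)\le\delta$, and define the OOD detectors by $\mathbf{P}'_k(x\in\mathbf{X}_k\mid D)=\mathbf{P}(x\in\mathbf{X}_k\mid D)$ for $k=1,\dots,T$. Then $H_{OOD,k}(x)\le\delta$ for all $k=1,\dots,T$. (ii) Suppose OOD detectors satisfy $H_{OOD,k}(x)\le\delta_k$ for $k=1,\dots,T$, and define task-id prediction probabilities by $\mathbf{P}(x\in\mathbf{X}_k\mid D)=\frac{\mathbf{P}'_k(x\in\mathbf{X}_k\mid D)}{\sum_{k'}\mathbf{P}'_{k'}(x\in\mathbf{X}_{k'}\mid D)}$. Then $H_{TP}(x)\le\big(\sum_k\mathbf{1}_{x\in\mathbf{X}_k}e^{\delta_k}\big)\big(\sum_k(1-e^{-\delta_k})\big)$, where $\mathbf{1}_{x\in\mathbf{X}_k}$ is the indicator of $x\in\mathbf{X}_k$.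
   Context: $\mathbf{X}$ is an input domain which is the disjoint union of task domains $\mathbf{X}_1,\dots,\mathbf{X}_T$. $D$ is a fixed conditioning event. A task-id prediction (TP) is a categorical distribution $\{\mathbf{P}(x\in\mathbf{X}_k\mid D)\}_{k=1}^T$ over the $T$ tasks (nonnegative, summing to $1$; in particular $1-\mathbf{P}(x\in\mathbf{X}_k\mid D)=\mathbf{P}(x\in\bigcup_{k'\neq k}\mathbf{X}_{k'}\mid D)$). For $x\in\mathbf{X}_{k_0}$, $H_{TP}(x)=-\log\mathbf{P}(x\in\mathbf{X}_{k_0}\mid D)$. An OOD detector for task $k$ is a Bernoulli distribution given by a value $\mathbf{P}'_k(x\in\mathbf{X}_k\mid D)\in[0,1]$, with $\mathbf{P}'_k(x\in\mathbf{X}\setminus\mathbf{X}_k\mid D)=1-\mathbf{P}'_k(x\in\mathbf{X}_k\mid D)$, and its cross-entropy is $H_{OOD,k}(x)=-\log\mathbf{P}'_k(x\in\mathbf{X}_k\mid D)$ if $x\in\mathbf{X}_k$ and $H_{OOD,k}(x)=-\log\mathbf{P}'_k(x\in\mathbf{X}\setminus\mathbf{X}_k\mid D)$ if $x\in\mathbf{X}\setminus\mathbf{X}_k$. *)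

(* Defs.v *)
From mathcomp Require Import all_boot all_order all_algebra.
From mathcomp Require Import all_classical all_reals all_analysis.
Set Implicit Arguments. Unset Strict Implicit. Unset Printing Implicit Defensive.
Import Order.TTheory GRing.Theory Num.Theory.
Local Open Scope ring_scope.

Definition neglog (R : realType) (p : R) : \bar R :=
  if p == 0 then +oo%E else (- ln p)%:E.

(* The input domain X is the disjoint union of X_1..X_T: encoded by the
   map [task : X -> 'I_T], with x \in X_k  iff  task x = k. *)

(* A task-id prediction (at the fixed x, conditioned on D):
   a categorical distribution over the T tasks. *)
Definition is_TP (R : realType) (T : nat) (p : 'I_T -> R) : Prop :=
  (forall k, 0 <= p k) /\ \sum_(k < T) p k = 1.

Definition H_TP (R : realType) (X : Type) (T : nat) (task : X -> 'I_T)
  (p : 'I_T -> R) (x : X) : \bar R := neglog (p (task x)).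

(* OOD detectors: q k = P'_k(x \in X_k | D) in [0,1]. *)
Definition is_OOD (R : realType) (T : nat) (q : 'I_T -> R) : Prop :=
  forall k, 0 <= q k <= 1.

Definition H_OOD (R : realType) (X : Type) (T : nat) (task : X -> 'I_T)
  (q : 'I_T -> R) (k : 'I_T) (x : X) : \bar R :=
  if task x == k then neglog (q k) else neglog (1 - q k).

(* Main.v *)
Require Import Defs.
From mathcomp Require Import all_boot all_order all_algebra.
From mathcomp Require Import all_classical all_reals all_analysis.
From mathcomp Require Import ring lra.
Set Implicit Arguments.
Import Order.TTheory GRing.Theory Num.Theory.
Local Open Scope ring_scope.

Lemma neglog_le (R : realType) (a d : R) :
  (neglog a <= d%:E)%E -> 0 <= a -> 0 < a /\ expR (- d) <= a.
Proof.
rewrite /neglog; case: eqP => [_|/eqP a0]; first by rewrite leye_eq.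
rewrite lee_fin => h ha.
have apos : 0 < a by rewrite lt0r a0 ha.
split => //.
by rewrite -[X in _ <= X](lnK apos) ler_expR; lra.
Qed.

Lemma neglog_ge (R : realType) (a d : R) :
  0 < a -> expR (- d) <= a -> (neglog a <= d%:E)%E.
Proof.
move=> apos h; rewrite /neglog gt_eqF // lee_fin.
rewrite -[X in _ <= X](lnK apos) ler_expR in h; lra.
Qed.

Theorem theorem2 (R : realType) (X : Type) (T : nat) (task : X -> 'I_T) (x : X) :
  (* (i) *)
  (forall (p : 'I_T -> R) (delta : R),
     is_TP p ->
     (H_TP task p x <= delta%:E)%E ->
     forall k : 'I_T, (H_OOD task p k x <= delta%:E)%E)
  /\
  (* (ii) *)
  (forall (q : 'I_T -> R) (delta : 'I_T -> R),
     is_OOD q ->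
     (forall k : 'I_T, (H_OOD task q k x <= (delta k)%:E)%E) ->
     (H_TP task (fun k => (q k / \sum_(k' < T) q k')%R) x <=
       (((\sum_(k < T) (task x == k)%:R * expR (delta k)) *
        (\sum_(k < T) (1 - expR (- delta k))))%R)%:E)%E).
Proof.
set k0 := task x.
split.
  move=> p d [p0 p1] h k.
  rewrite /H_TP -/k0 in h.
  have [pk0 ek0] := @neglog_le R _ _ h (p0 _).
  rewrite /H_OOD -/k0; case: eqP => [<-|/eqP nk] //.
  have hs : p k + p k0 <= 1.
    rewrite -p1 (bigD1 k0) //= addrC lerD2r (bigD1 k) 1?eq_sym //= lerDl.
    by apply: sumr_ge0 => i _; apply: p0.
  apply: neglog_ge; lra.
move=> q d hq hd.
have h0 := hd k0; rewrite /H_OOD -/k0 eqxx in h0.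
have [q0pos e0] := @neglog_le R _ _ h0 (proj1 (andP (hq k0))).
have q01 := hq k0.
have qk : forall k, k != k0 -> expR (- d k) <= 1 - q k.
  move=> k nk; have := hd k; rewrite /H_OOD -/k0 eq_sym (negbTE nk) => h.
  have := hq k => /andP [? ?].
  by case: (@neglog_le R _ _ h ltac:(lra)).
set A := \sum_(k < T | k != k0) q k.
set B := \sum_(k < T | k != k0) (1 - expR (- d k)).
have SA : \sum_(k < T) q k = q k0 + A by rewrite (bigD1 k0).
have A0 : 0 <= A by apply: sumr_ge0 => i _; case/andP: (hq i).
have AB : A <= B by apply: ler_sum => i ni; have := qk i ni; lra.
have C : \sum_(k < T) (1 - expR (- d k)) = (1 - expR (- d k0)) + B.
  by rewrite (bigD1 k0).
have F : \sum_(k < T) (k0 == k)%:R * expR (d k) = expR (d k0).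
  rewrite (bigD1 k0) //= eqxx mul1r big1 ?addr0 // => i ni.
  by rewrite eq_sym (negbTE ni) mul0r.
rewrite /H_TP -/k0 F C SA.
have Spos : 0 < q k0 + A by lra.
rewrite /neglog gt_eqF ?divr_gt0 // lee_fin.
have -> : - ln (q k0 / (q k0 + A)) = ln (1 + A / q k0).
  rewrite -lnV ?posrE ?divr_gt0 //; congr ln; field.
  by apply/andP; split; rewrite gt_eqF.
have Aq : 0 <= A / q k0 by rewrite divr_ge0 // ltW.
apply: le_trans (le_ln1Dx _) _; first lra.
have ee := expRxMexpNx_1 (d k0).
have ep := expR_gt0 (d k0).
have ep' := expR_gt0 (- d k0).
have h1 : A / q k0 <= A * expR (d k0).
  rewrite ler_pdivrMr //.
  have : 1 <= expR (d k0) * q k0 by nra.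
  nra.
have : 0 <= expR (d k0) * (B - A) by nra.
have : 0 <= expR (d k0) * (1 - expR (- d k0)) by nra.
nra.
Qed.
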